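(* Let $n$ be a positive integer and let $w_1 \le \dots \le w_m$ be a feasible partition of $n$, with partial sums $R_i = w_1+\dots+w_i$ and $R_0=0$. Then for every $i$ with $1 \le i \le m$, $w_i \le 2R_{i-1}+1$.
   Context: For a positive integer $n$, a weighing partition of $n$ is a multiset of positive integers $\{w_1,\dots,w_k\}$ summing to $n$ such that every integer $\ell$ with $1\le\ell\le n$ equals $\sum_j u_j w_j$ for some $u_j\in\{-1,0,1\}$. Let $m$ be the minimum number of parts of a weighing partition of $n$. A feasible partition of $n$ is a weighing partition with exactly $m$ parts, written $w_1\le\dots\le w_m$. $R_i=w_1+\dots+w_i$, $R_0=0$, so $R_m=n$. *)

(* Defs.v *)
From mathcomp Require Import all_boot all_order all_algebra.
Set Implicit Arguments. Unset Strict Implicit. Unset Printing Implicit Defensive.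
Import Order.TTheory GRing.Theory Num.Theory.

(* A multiset of positive integers is represented by a list [w] (order of the
   entries is irrelevant for the definitions below). *)

Definition weighing_partition (n : nat) (w : seq nat) : Prop :=
  all (fun x => 0 < x)%N w /\ sumn w = n /\
  forall l : nat, (1 <= l <= n)%N ->
    exists u : nat -> int,
      (forall j, u j \in [:: (-1)%R; 0%R; 1%R]) /\
      (l%:Z = \sum_(j < size w) u j * (nth 0%N w j)%:Z)%R.

Definition feasible_partition (n : nat) (w : seq nat) : Prop :=
  weighing_partition n w /\
  forall w' : seq nat, weighing_partition n w' -> (size w <= size w')%N.

(* R_i = w_1 + ... + w_i (1-indexed), R_0 = 0 *)
Definition R_ (w : seq nat) (i : nat) : nat := sumn (take i w).

(* Main.v *)
Require Import Defs.
From mathcomp Require Import all_boot all_order all_algebra.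
From mathcomp Require Import zify.
From Stdlib Require Import Lia.
Import Order.TTheory GRing.Theory Num.Theory.

Lemma Posz_sum_nat (m p : nat) (F : nat -> nat) :
  Posz (\sum_(m <= j < p) F j)%N = (\sum_(m <= j < p) (F j)%:Z)%R.
Proof. by rewrite (big_morph Posz PoszD (erefl _)). Qed.

Lemma sumn_nat (s : seq nat) : sumn s = (\sum_(0 <= j < size s) nth 0 s j)%N.
Proof. by rewrite sumnE (big_nth 0). Qed.

(* w_i (1-indexed) is nth 0 w (i-1); the list is sorted nondecreasingly. *)
Theorem theorem2 (n : nat) (w : seq nat) :
  (0 < n)%N -> feasible_partition n w -> sorted leq w ->
  forall i : nat, (1 <= i <= size w)%N ->
    (nth 0 w i.-1 <= 2 * R_ w i.-1 + 1)%N.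
Proof.
move=> n0 [[wpos [wsum wrep]] _] srt i /andP [i1 iw].
set k := i.-1. set s := size w.
have ks : (k < s)%N by rewrite /k; case: (i) i1 iw.
set A := R_ w k.
have HA : A = (\sum_(0 <= j < k) nth 0 w j)%N.
  rewrite /A /R_ sumn_nat size_takel; last exact: ltnW.
  by apply: eq_big_nat => j /andP [_ jk]; rewrite nth_take.
have Hn : n = (A + \sum_(k <= j < s) nth 0 w j)%N.
  by rewrite -wsum sumn_nat HA -big_cat_nat //= ltnW.
rewrite leqNgt; apply/negP => Hbig.
have l1 : (1 <= n - 2 * A - 1 <= n)%N.
  have : (nth 0 w k <= \sum_(k <= j < s) nth 0 w j)%N.
    by rewrite (big_ltn ks) leq_addr.
  rewrite -/s; move: Hn; move: (\sum_(k <= j < s) nth 0 w j)%N => S0.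
  clear -Hbig; lia.
have [u [uP ul]] := wrep _ l1.
have Hsum : forall F : nat -> int,
    (\sum_(j < s) F j = \sum_(0 <= j < k) F j + \sum_(k <= j < s) F j)%R.
  move=> F; rewrite -(big_mkord xpredT F).
  by rewrite (@big_cat_nat _ _ _ k 0 s) // ltnW.
rewrite (Hsum (fun j => u j * (nth 0 w j)%:Z)%R) in ul.
set T := (fun j => (1 - u j) * (nth 0 w j)%:Z)%R.
have Tge0 : forall j, (0 <= T j)%R.
  move=> j; rewrite /T; apply: mulr_ge0 => //.
  by move: (uP j); rewrite !inE => /or3P [] /eqP ->.
have Tle : forall j, (T j <= 2 * (nth 0 w j)%:Z)%R.
  move=> j; rewrite /T; apply: ler_wpM2r => //.
  by move: (uP j); rewrite !inE => /or3P [] /eqP ->.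
have eT : forall a b, (\sum_(a <= j < b) T j =
    \sum_(a <= j < b) (nth 0 w j)%:Z - \sum_(a <= j < b) (u j * (nth 0 w j)%:Z))%R.
  by move=> a b; rewrite -sumrB; apply: eq_bigr => j _; rewrite /T mulrBl mul1r.
have HD : ((2 * A + 1)%:Z =
   \sum_(0 <= j < k) T j + \sum_(k <= j < s) T j)%R.
  rewrite !eT -!Posz_sum_nat -HA.
  move: ul Hn l1; move: (\sum_(k <= j < s) nth 0 w j)%N => S0.
  move: (\sum_(0 <= j < k) (u j * (nth 0 w j)%:Z))%R => X1.
  move: (\sum_(k <= j < s) (u j * (nth 0 w j)%:Z))%R => X2.
  move=> e Hn' l1'.
  have e' : (X1 + X2 = (A%:Z + S0%:Z) - (2 * A + 1)%N%:Z)%R.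
    have E : (n - 2 * A - 1 = n - (2 * A + 1))%N by clear; lia.
    rewrite E in e; rewrite -e -PoszD -Hn' -subzn //.
    by case/andP: l1' => ha _; move: ha; rewrite -subnDA subn_gt0 => /ltnW.
  by rewrite addrACA -opprD e' opprB addrC subrK.
have H1 : (\sum_(0 <= j < k) T j <= (2 * A)%:Z)%R.
  have -> : ((2 * A)%:Z = \sum_(0 <= j < k) (2 * (nth 0 w j)%:Z))%R.
    by rewrite -mulr_sumr -Posz_sum_nat -HA PoszM.
  by apply: ler_sum => j _; apply: Tle.
have H0 : (0 <= \sum_(0 <= j < k) T j)%R by apply: sumr_ge0 => j _.
case: (boolP (has (fun j => u j != 1%R) (index_iota k s))).
- move/hasP => [j jin uj].
  have : (T j <= \sum_(k <= j < s) T j)%R.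
    rewrite (bigD1_seq j) ?iota_uniq //= lerDl.
    by apply: sumr_ge0 => x _.
  have jr : (k <= j < s)%N by rewrite -mem_index_iota.
  have wkj : (nth 0 w k <= nth 0 w j)%N.
    case/andP: jr => kj js.
    apply: (sorted_leq_nth leq_trans leqnn 0 srt); rewrite ?inE //.
  have Tj : ((nth 0 w j)%:Z <= T j)%R.
    rewrite /T; apply: ler_peMl => //.
    by move: (uP j) uj; rewrite !inE => /or3P [] /eqP ->.
  move: HD H0 Tj; rewrite -/s.
  move: (\sum_(k <= j < s) T j)%R (\sum_(0 <= j < k) T j)%R (T j) => X2 X1 Y.
  move=> e h0 h1 h2.
  have : ((nth 0%N w j)%:Z <= (2 * A + 1)%N%:Z)%R.
    by rewrite e; apply: le_trans h1 _; apply: le_trans h2 _; rewrite lerDr.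
  rewrite lez_nat => hh.
  clear -wkj Hbig hh; clearbody A k; lia.
- move/hasPn => Hall.
  have : (\sum_(k <= j < s) T j = 0)%R.
    rewrite big_seq; apply: big1 => j /Hall; rewrite negbK => /eqP uj.
    by rewrite /T uj subrr mul0r.
  move: HD H1; rewrite -/s.
  move: (\sum_(k <= j < s) T j)%R (\sum_(0 <= j < k) T j)%R => X2 X1.
  move=> e h1 h2; rewrite h2 addr0 in e; move: h1; rewrite -e lez_nat.
  clear; clearbody A; lia.
Qed.
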